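(* Let $\mathbf{I}$ be a $d$-system of ideals in a ring $R$ and $A:=\mathscr{A}(R,\mathbf{I})$. For all $1\le k\le d$, there is an isomorphism of left $A$-modules $\Delta_k\cong J_{k-1}T_{d+1-k}$.
   Context: A $d$-system of ideals in $R$ is a collection $\{I_{ij}\mid1\le i,j\le d+1\}$ of two-sided ideals with $I_{ij}I_{jk}\subset I_{ik}$ and $I_{ij}=R$ for $i\ge j$. $\mathscr{A}(R,\mathbf{I}):=\bigoplus_{1\le i,j\le d}X_{ij}$, $X_{ij}:=I_{ij}/I_{i,d+1}$, with multiplication $(x+I_{i,d+1})(y+I_{k,d+1})=\delta_{jk}(xy+I_{i,d+1})\in X_{il}$ for $x\in I_{ij},y\in I_{kl}$. Put $e_k:=1+I_{k,d+1}\in X_{kk}$, $f_j:=\sum_{k>j}e_k$ for $0\le j\le d$ ($f_0=1$, $f_d=0$), $J_j:=Af_jA$, $\Delta_k:=(A/J_k)e_k$. Define $\mathbb{T}_{kl}:=R/I_{k,d+2-l}$ and $T_j:=\bigoplus_{i=1}^d\mathbb{T}_{ij}$, a left $A$-module via $(x+I_{i,d+1})\cdot(r+I_{k,d+2-l})=\delta_{jk}(xr+I_{i,d+2-l})\in\mathbb{T}_{il}$ for $x\in I_{ij}$, $r\in R$. *)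

(* Defs.v *)
From HB Require Import structures.
From mathcomp Require Import all_boot all_order all_algebra.
Set Implicit Arguments.
Unset Strict Implicit.
Unset Printing Implicit Defensive.
Import GRing.Theory.
Local Open Scope ring_scope.

Section DSystem.
Variable R : pzRingType.

Definition two_sided_ideal (P : R -> Prop) : Prop :=
  [/\ P 0,
      (forall x y, P x -> P y -> P (x - y)),
      (forall r x, P x -> P (r * x)) &
      (forall r x, P x -> P (x * r))].

Definition d_system (d : nat) (I : nat -> nat -> R -> Prop) : Prop :=
  [/\ (forall i j, (1 <= i <= d.+1)%N -> (1 <= j <= d.+1)%N ->
         two_sided_ideal (I i j)),
      (forall i j, (1 <= i <= d.+1)%N -> (1 <= j <= i)%N -> forall x, I i j x) &
      (forall i j k, (1 <= i <= d.+1)%N -> (1 <= j <= d.+1)%N ->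
         (1 <= k <= d.+1)%N ->
         forall x y, I i j x -> I j k y -> I i k (x * y))].

Variables (d : nat) (I : nat -> nat -> R -> Prop).

(* Elements of A = (+)_{i,j} I_ij / I_{i,d+1} are represented by d x d
   matrices X (row/column index i : 'I_d stands for paper index i+1) with
   X i j in I_{ij}; two representatives give the same element iff their
   difference has (i,j)-entry in I_{i,d+1}. The multiplication of A is the
   matrix product (bilinear extension of the paper's multiplication). *)
Definition inA (X : 'M[R]_d) : Prop := forall i j : 'I_d, I i.+1 j.+1 (X i j).
Definition zeroA (X : 'M[R]_d) : Prop := forall i j : 'I_d, I i.+1 d.+1 (X i j).

Definition eA (k : nat) : 'M[R]_d :=
  \matrix_(i, j) ((i == j) && (i.+1 == k)%N)%:R.
Definition fA (j : nat) : 'M[R]_d :=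
  \matrix_(i, i') ((i == i') && (j < i.+1)%N)%:R.

(* membership of (the class of) X in the two-sided ideal J_j = A f_j A *)
Definition inJ (j : nat) (X : 'M[R]_d) : Prop :=
  inA X /\ exists n (a b : 'I_n -> 'M[R]_d),
    (forall t, inA (a t) /\ inA (b t)) /\
    zeroA (X - \sum_(t < n) a t *m fA j *m b t).

(* Delta_k = (A/J_k) e_k : representatives {a e_k | a in A}, and a
   representative is zero iff it lies in J_k. *)
Definition Delta_S (k : nat) (X : 'M[R]_d) : Prop := exists2 a, inA a & X = a *m eA k.
Definition Delta_Z (k : nat) (X : 'M[R]_d) : Prop := inJ k X.

(* T_j = (+)_i R / I_{i,d+2-j}: column vectors, A acting by matrix product;
   a vector is zero iff its i-th entry lies in I_{i,d+2-j}. *)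
Definition T_Z (j : nat) (v : 'cV[R]_d) : Prop :=
  forall i : 'I_d, I i.+1 (d.+2 - j) (v i ord0).
(* J_m T_j = finite sums of a.t with a in J_m, t in T_j *)
Definition JT_S (m j : nat) (v : 'cV[R]_d) : Prop :=
  exists n (a : 'I_n -> 'M[R]_d) (t : 'I_n -> 'cV[R]_d),
    (forall s, inJ m (a s)) /\ T_Z j (v - \sum_(s < n) a s *m t s).

(* Isomorphism of left A-modules between the subquotients S1/Z1 and S2/Z2
   (A acting through act1, act2): a map of representatives that is
   well-defined and injective modulo Z, additive and A-linear modulo Z2,
   and surjective modulo Z2. *)
Definition subquot_iso (V1 V2 : zmodType)
  (act1 : 'M[R]_d -> V1 -> V1) (act2 : 'M[R]_d -> V2 -> V2)
  (S1 Z1 : V1 -> Prop) (S2 Z2 : V2 -> Prop) : Prop :=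
  exists f : V1 -> V2,
    [/\ (forall v, S1 v -> S2 (f v)),
        (forall v w, S1 v -> S1 w -> (Z1 (v - w) <-> Z2 (f v - f w))),
        (forall v w, S1 v -> S1 w -> Z2 (f (v + w) - (f v + f w))),
        (forall x v, inA x -> S1 v -> Z2 (f (act1 x v) - act2 x (f v))) &
        (forall u, S2 u -> exists2 v, S1 v & Z2 (f v - u))].

Definition Delta_iso_JT (k : nat) : Prop :=
  subquot_iso (fun x (v : 'M[R]_d) => x *m v) (fun x (v : 'cV[R]_d) => x *m v)
    (Delta_S k) (Delta_Z k) (JT_S k.-1 (d.+1 - k)) (T_Z (d.+1 - k)).

End DSystem.

(* Main.v *)
Require Import Defs.
From HB Require Import structures.
From mathcomp Require Import all_boot all_order all_algebra.
From mathcomp Require Import zify.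
Set Implicit Arguments.
Unset Strict Implicit.
Unset Printing Implicit Defensive.
Import GRing.Theory.
Local Open Scope ring_scope.

Lemma mul_supp (R : pzRingType) m n p (M : 'M[R]_(m,n)) (B : 'M[R]_(n,p)) i j r :
  (forall l, l != r -> B l j = 0) -> (M *m B) i j = M i r * B r j.
Proof.
move=> H; rewrite mxE (bigD1 r) //= big1 ?addr0 // => l hl.
by rewrite H // mulr0.
Qed.

Arguments mul_supp {R m n p M B i j} r.

Section Aux.
Variables (R : pzRingType) (d : nat) (I : nat -> nat -> R -> Prop).
Hypothesis HI : d_system d I.

Lemma idT i j : (1 <= i <= d.+1)%N -> (1 <= j <= d.+1)%N -> two_sided_ideal (I i j).
Proof. by case: HI => H _ _; apply: H. Qed.

Lemma id0 i j : (1 <= i <= d.+1)%N -> (1 <= j <= d.+1)%N -> I i j 0.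
Proof. by move=> hi hj; case: (idT hi hj). Qed.

Lemma idB i j x y : (1 <= i <= d.+1)%N -> (1 <= j <= d.+1)%N ->
  I i j x -> I i j y -> I i j (x - y).
Proof. by move=> hi hj; case: (idT hi hj) => _ H _ _; apply: H. Qed.

Lemma idN i j x : (1 <= i <= d.+1)%N -> (1 <= j <= d.+1)%N ->
  I i j x -> I i j (- x).
Proof. by move=> hi hj hx; rewrite -sub0r; apply: idB => //; apply: id0. Qed.

Lemma idD i j x y : (1 <= i <= d.+1)%N -> (1 <= j <= d.+1)%N ->
  I i j x -> I i j y -> I i j (x + y).
Proof. by move=> hi hj hx hy; rewrite -[y]opprK; apply: idB => //; apply: idN. Qed.

Lemma idMl i j r x : (1 <= i <= d.+1)%N -> (1 <= j <= d.+1)%N ->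
  I i j x -> I i j (r * x).
Proof. by move=> hi hj; case: (idT hi hj) => _ _ H _; apply: H. Qed.

Lemma idMr i j r x : (1 <= i <= d.+1)%N -> (1 <= j <= d.+1)%N ->
  I i j x -> I i j (x * r).
Proof. by move=> hi hj; case: (idT hi hj) => _ _ _ H; apply: H. Qed.

Lemma idsum i j n (F : 'I_n -> R) : (1 <= i <= d.+1)%N -> (1 <= j <= d.+1)%N ->
  (forall t, I i j (F t)) -> I i j (\sum_t F t).
Proof.
move=> hi hj H; apply: (big_ind (I i j)); first exact: id0.
  by move=> x y; apply: idD.
by move=> t _; apply: H.
Qed.

Lemma idall i j x : (1 <= j <= i)%N -> (i <= d.+1)%N -> I i j x.
Proof. by move=> hj hi; case: HI => _ H _; apply: H => //; lia. Qed.

Lemma idincl i l m x : (1 <= i <= d.+1)%N -> (l <= d.+1)%N -> (1 <= m <= l)%N ->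
  I i l x -> I i m x.
Proof.
move=> hi hl hm hx; rewrite -[x]mulr1.
case: HI => _ _ H3; apply: (H3 i l m) => //; try lia.
by apply: idall => //; lia.
Qed.

End Aux.

Section Main.
Variables (R : pzRingType) (d : nat) (I : nat -> nat -> R -> Prop).
Hypothesis HI : d_system d I.
Variable k : nat.
Hypothesis hk : (1 <= k <= d)%N.

Lemma ordr (i : 'I_d) : (1 <= i.+1 <= d.+1)%N.
Proof. have := ltn_ord i; lia. Qed.
Lemma hk1 : (1 <= k.+1 <= d.+1)%N. Proof. lia. Qed.
Lemma hk0 : (1 <= k <= d.+1)%N. Proof. lia. Qed.

Definition TZ (v : 'cV[R]_d) := forall i : 'I_d, I i.+1 k.+1 (v i ord0).

Lemma TZE v : T_Z I (d.+1 - k) v <-> TZ v.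
Proof. by rewrite /T_Z (_ : (d.+2 - (d.+1 - k) = k.+1)%N) //; lia. Qed.

Lemma TZ0 : TZ 0.
Proof. by move=> i; rewrite mxE; apply: id0 HI _ _ (ordr i) hk1. Qed.

Lemma TZD v w : TZ v -> TZ w -> TZ (v + w).
Proof. by move=> hv hw i; rewrite mxE; apply: idD HI _ _ _ _ (ordr i) hk1 _ _. Qed.

Lemma TZN v : TZ v -> TZ (- v).
Proof. by move=> hv i; rewrite mxE; apply: idN HI _ _ _ (ordr i) hk1 _. Qed.

Lemma TZB v w : TZ v -> TZ w -> TZ (v - w).
Proof. by move=> hv hw; apply: TZD => //; apply: TZN. Qed.

Lemma TZsum n (F : 'I_n -> 'cV[R]_d) : (forall t, TZ (F t)) -> TZ (\sum_t F t).
Proof.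
move=> H i; rewrite summxE; apply: idsum HI _ _ _ _ (ordr i) hk1 _ => t.
exact: H.
Qed.

Lemma TZ_zero (Z : 'M[R]_d) t : zeroA I Z -> TZ (Z *m t).
Proof.
move=> hZ i; rewrite mxE; apply: idsum HI _ _ _ _ (ordr i) hk1 _ => m.
apply: idMr HI _ _ _ _ (ordr i) hk1 _.
by apply: (idincl HI (l := d.+1)) (ordr i) _ _ (hZ i m); lia.
Qed.

Lemma TZ_f (p : 'M[R]_d) (w : 'cV[R]_d) : inA I p ->
  (forall m : 'I_d, (m < k)%N -> w m ord0 = 0) -> TZ (p *m w).
Proof.
move=> hp hw i; rewrite mxE; apply: idsum HI _ _ _ _ (ordr i) hk1 _ => m.
case: (ltnP m k) => hm.
  by rewrite hw // mulr0; apply: id0 HI _ _ (ordr i) hk1.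
apply: idMr HI _ _ _ _ (ordr i) hk1 _.
by apply: (idincl HI (l := m.+1)) (ordr i) _ _ (hp i m); have := ltn_ord m; lia.
Qed.

Lemma fAy_zero (y : 'cV[R]_d) (m : 'I_d) : (m < k)%N -> (fA R d k *m y) m ord0 = 0.
Proof.
move=> hm; rewrite mxE big1 // => l _; rewrite mxE.
have -> : (k < m.+1)%N = false by lia.
by rewrite andbF mul0r.
Qed.

Lemma hr : (k.-1 < d)%N. Proof. lia. Qed.
Definition rk : 'I_d := Ordinal hr.
Definition u : 'cV[R]_d := \col_m ((m == rk)%:R).

Lemma jr (j : 'I_d) : (j.+1 == k)%N = (j == rk).
Proof. rewrite -(inj_eq val_inj) /=; apply/eqP/eqP; lia. Qed.

Lemma ceA (c : 'M[R]_d) i j :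
  (c *m eA R d k) i j = if (j == rk) then c i j else 0.
Proof.
rewrite (mul_supp j) => [|l hl]; last by rewrite mxE (negbTE hl).
rewrite mxE eqxx /= jr; case: eqP => _; [by rewrite mulr1 | by rewrite mulr0].
Qed.

Lemma Xu (X : 'M[R]_d) i : (X *m u) i ord0 = X i rk.
Proof.
rewrite (mul_supp rk) => [|l hl]; last by rewrite mxE (negbTE hl).
by rewrite mxE eqxx mulr1.
Qed.

Lemma inA0 : @inA R d I 0.
Proof. move=> i j; rewrite mxE; apply: id0 HI _ _ (ordr i) (ordr j). Qed.

Lemma zeroA0 : @zeroA R d I 0.
Proof. move=> i j; rewrite mxE; apply: id0 HI _ _ (ordr i) _; lia. Qed.

Lemma inAB (a b : 'M[R]_d) : inA I a -> inA I b -> inA I (a - b).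
Proof.
move=> ha hb i j; rewrite !mxE; apply: idB HI _ _ _ _ (ordr i) (ordr j) _ _;
  [exact: ha | exact: hb].
Qed.

Lemma inAD (a b : 'M[R]_d) : inA I a -> inA I b -> inA I (a + b).
Proof.
move=> ha hb i j; rewrite !mxE; apply: idD HI _ _ _ _ (ordr i) (ordr j) _ _;
  [exact: ha | exact: hb].
Qed.

Lemma inA_ceA (c : 'M[R]_d) : inA I c -> inA I (c *m eA R d k).
Proof.
move=> hc i j; rewrite ceA; case: eqP => _; first exact: hc.
exact: id0 HI _ _ (ordr i) (ordr j).
Qed.

Lemma inA_eA : inA I (eA R d k).
Proof.
move=> i j; rewrite mxE; case: eqP => [<-|_] /=.
  case: (_ == _) => /=; first by rewrite mulr1n; apply: (idall HI); have := ltn_ord i; lia.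
  by rewrite mulr0n; apply: id0 HI _ _ (ordr i) (ordr i).
by rewrite mulr0n; apply: id0 HI _ _ (ordr i) (ordr j).
Qed.

Lemma fAe : fA R d k.-1 *m eA R d k = eA R d k.
Proof.
apply/matrixP => i j; rewrite (mul_supp j) => [|l hl]; last by rewrite mxE (negbTE hl).
rewrite !mxE eqxx /=; case: (i =P j) => [->|_] /=; last by rewrite mul0r.
case: (j.+1 =P k) => h /=; last by rewrite mulr0.
have -> : (k.-1 < j.+1)%N by lia.
by rewrite mulr1.
Qed.

Lemma fA_split : fA R d k.-1 = eA R d k + fA R d k.
Proof.
apply/matrixP => i j; rewrite !mxE; case: (i =P j) => _ /=; last by rewrite addr0.
case: (i.+1 =P k) => h /=.
  have -> : (k.-1 < i.+1)%N by lia.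
  have -> : (k < i.+1)%N = false by lia.
  by rewrite addr0.
case: (ltnP k i.+1) => h2.
  have -> : (k.-1 < i.+1)%N by lia.
  by rewrite add0r.
have -> : (k.-1 < i.+1)%N = false by lia.
by rewrite addr0.
Qed.

Lemma eAu : eA R d k *m u = u.
Proof.
apply/matrixP => i j; rewrite (mul_supp rk) => [|l hl]; last by rewrite mxE (negbTE hl).
rewrite !mxE eqxx mulr1; case: (i =P rk) => [->|_] //=.
by have -> : (k.-1.+1 == k)%N by lia.
Qed.

Lemma utu : u^T *m u = 1%:M.
Proof.
apply/matrixP => i j; rewrite (mul_supp rk) => [|l hl]; last by rewrite mxE (negbTE hl).
by rewrite !mxE eqxx !ord1 eqxx mulr1.
Qed.

Lemma core (c : 'M[R]_d) : inA I c ->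
  (inJ I k (c *m eA R d k) <-> TZ (c *m eA R d k *m u)).
Proof.
move=> hc; split.
  move=> [_ [n [a [b [hab hZ]]]]].
  set X := c *m eA R d k; set S := \sum_(t < n) a t *m fA R d k *m b t.
  rewrite -(subrK S X) mulmxDl; apply: TZD; first exact: TZ_zero.
  rewrite /S mulmx_suml; apply: TZsum => t.
  rewrite -!mulmxA; apply: TZ_f; first exact: (hab t).1.
  by move=> m hm; rewrite fAy_zero.
move=> hX.
have hc' : forall i : 'I_d, I i.+1 k.+1 (c i rk).
  by move=> i; have := hX i; rewrite Xu ceA eqxx.
split; first exact: inA_ceA.
case: (ltnP k d) => hkd.
  pose kk : 'I_d := Ordinal hkd.
  pose a : 'M[R]_d := \matrix_(i, j) (if j == kk then c i rk else 0).
  pose b : 'M[R]_d := \matrix_(i, j) (((i == kk) && (j == rk))%:R).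
  exists 1%N, (fun _ => a), (fun _ => b); split.
    move=> _; split.
      move=> i j; rewrite mxE; case: eqP => [->|_]; first exact: hc'.
      exact: id0 HI _ _ (ordr i) (ordr j).
    move=> i j; rewrite mxE; case: eqP => [->|_] /=; last by rewrite mulr0n; apply: id0 HI _ _ (ordr i) (ordr j).
    case: eqP => [->|_] /=; last by rewrite mulr0n; apply: id0 HI _ _ (ordr kk) (ordr j).
    rewrite mulr1n; apply: (idall HI) => /=; lia.
  rewrite big_ord1.
  have -> : a *m fA R d k *m b = c *m eA R d k.
    apply/matrixP => i j; rewrite ceA /a /b (mul_supp kk) => [|l hl]; last first.
      by rewrite mxE; move: hl; case: eqP => //= _ _; rewrite ?mulr0n ?andbF ?mul0r.
    rewrite (mul_supp kk) => [|l hl]; last first.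
      by rewrite mxE; move: hl; case: eqP => //= _ _; rewrite ?mulr0n ?andbF ?mul0r.
    rewrite !mxE !eqxx /=.
    have -> : (k < k.+1)%N by [].
    rewrite mulr1; case: eqP => [->|_]; by rewrite ?mulr1 ?mulr0.
  by rewrite subrr; apply: zeroA0.
exists 0%N, (fun _ => 0), (fun _ => 0); split.
  by move=> _; split; apply: inA0.
rewrite big_ord0 subr0 => i j; rewrite ceA; case: eqP => [->|_].
  by have := hc' i; have -> : k.+1 = d.+1 by lia.
by apply: id0 HI _ _ (ordr i) _; lia.
Qed.

Definition G (w : 'cV[R]_d) := exists2 v, Delta_S I k v & TZ (v *m u - w).

Lemma G0 : G 0.
Proof.
exists 0; first by exists 0; [apply: inA0 | rewrite mul0mx].
by rewrite mul0mx subrr; apply: TZ0.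
Qed.

Lemma GD w1 w2 : G w1 -> G w2 -> G (w1 + w2).
Proof.
move=> [v1 [a1 ha1 ->] h1] [v2 [a2 ha2 ->] h2].
exists (a1 *m eA R d k + a2 *m eA R d k).
  by exists (a1 + a2); [apply: inAD | rewrite mulmxDl].
by rewrite mulmxDl opprD addrACA; apply: TZD.
Qed.

Lemma Gsum n (F : 'I_n -> 'cV[R]_d) : (forall t, G (F t)) -> G (\sum_t F t).
Proof.
move=> H; apply: (big_ind G); [exact: G0 | exact: GD | by move=> t _; apply: H].
Qed.

Lemma GT z : TZ z -> G z.
Proof.
move=> hz; exists 0; first by exists 0; [apply: inA0 | rewrite mul0mx].
by rewrite mul0mx sub0r; apply: TZN.
Qed.

Lemma eAy_zero (y : 'cV[R]_d) (l : 'I_d) : l != rk -> (eA R d k *m y) l ord0 = 0.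
Proof.
move=> hl; rewrite mxE big1 // => m _; rewrite mxE jr.
by move: hl; case: eqP => //= _ _; rewrite andbF mul0r.
Qed.

Lemma Gp (p : 'M[R]_d) y : inA I p -> G (p *m fA R d k.-1 *m y).
Proof.
move=> hp; rewrite fA_split mulmxDr mulmxDl; apply: GD; last first.
  apply: GT; rewrite -mulmxA; apply: TZ_f => // m hm; exact: fAy_zero.
pose a := p *m eA R d k *m y *m u^T.
exists (a *m eA R d k).
  exists a => //.
  move=> i j; rewrite /a (mul_supp ord0) => [|l]; last by rewrite ord1 eqxx.
  have -> : u^T ord0 j = (j == rk)%:R by rewrite !mxE.
  case: (j =P rk) => [->|_] /=.
    rewrite mulr1 -mulmxA (mul_supp rk) => [|l hl]; last exact: eAy_zero.
    apply: idMr HI _ _ _ _ (ordr i) (ordr rk) _; exact: hp.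
  by rewrite mulr0; apply: id0 HI _ _ (ordr i) (ordr j).
rewrite -mulmxA eAu /a -mulmxA utu mulmx1 subrr; exact: TZ0.
Qed.

Lemma main : Delta_iso_JT d I k.
Proof.
exists (fun X => X *m u); split.
- move=> v [a ha ->].
  exists 1%N, (fun _ => a *m eA R d k), (fun _ => u); split.
    move=> _; split; first exact: inA_ceA.
    exists 1%N, (fun _ => a), (fun _ => eA R d k); split.
      by move=> _; split; [ | apply: inA_eA].
    by rewrite big_ord1 -mulmxA fAe subrr; apply: zeroA0.
  by apply/TZE; rewrite big_ord1 subrr; apply: TZ0.
- move=> v w [a ha ->] [b hb ->]; rewrite -!mulmxBl /Delta_Z.
  have := core (inAB ha hb); have := TZE ((a - b) *m eA R d k *m u); tauto.
- by move=> v w _ _; rewrite mulmxDl subrr; apply/TZE; apply: TZ0.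
- by move=> x v _ _; rewrite mulmxA subrr; apply/TZE; apply: TZ0.
move=> U [n [a [t [ha hz]]]].
have : G U.
  rewrite -(subrK (\sum_(s < n) a s *m t s) U); apply: GD.
    by apply: GT; apply/TZE.
  apply: Gsum => s; case: (ha s) => _ [m [p [q [hpq hZ]]]].
  set S := \sum_(t0 < m) p t0 *m fA R d k.-1 *m q t0.
  rewrite -(subrK S (a s)) mulmxDl; apply: GD; first exact/GT/TZ_zero.
  rewrite /S mulmx_suml; apply: Gsum => t0; rewrite -mulmxA; apply: Gp.
  exact: (hpq t0).1.
by case=> v hv hT; exists v => //; apply/TZE.
Qed.

End Main.

Theorem lemma4p5 (R : pzRingType) (d : nat) (I : nat -> nat -> R -> Prop)
  (HI : d_system d I) (k : nat) (hk : (1 <= k <= d)%N) :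
  Delta_iso_JT d I k.
Proof. exact: (@main R d I HI k hk). Qed.
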